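(* Assume $\phi$ satisfies (A2) and (A3) and that the gain matrix $V$ is irreducible. Then a point $q\in\mathcal F$ belongs to $\partial\mathcal F$ if and only if there exists a weight vector $w\in\mathbb R_{++}^K$ (i.e. $w>0$ entrywise) such that $q$ maximizes $x\mapsto w^Tx$ over $\mathcal F$.
   Context: Network model: $K\ge 2$ links, $\mathcal K=\{1,\dots,K\}$. Power vectors $p\in\mathbb R_+^K$. Power constraint set $\mathcal P=\{p\in\mathbb R_+^K: Cp\le\hat p\}$, where $C\in\{0,1\}^{N\times K}$ has at least one entry equal to $1$ in each column and $\hat p=(P_1,\dots,P_N)\in\mathbb R_{++}^N$; $\mathcal P_+=\mathcal P\cap\mathbb R_{++}^K$. Gain matrix $V=(v_{k,l})\in\mathbb R_+^{K\times K}$ with zero diagonal, noise vector $z\in\mathbb R_{++}^K$, and $\mathrm{SIR}_k(p)=p_k/((Vp)_k+z_k)$. SIR targets $\gamma_1,\dots,\gamma_K>0$. Assumption (A2): $\phi:\mathbb R_{++}\to\mathbb R$ is continuously differentiable and strictly increasing; let $\mathcal Q=\phi(\mathbb R_{++})$. Assumption (A3): the inverse function $\phi^{-1}:\mathcal Q\to\mathbb R_{++}$ is log-convex. Feasible QoS region: $\mathcal F=\{q\in\mathcal Q^K:\exists p\in\mathcal P_+ \text{ with } q_k=\phi(\mathrm{SIR}_k(p)/\gamma_k)\ \forall k\in\mathcal K\}$; for each $q\in\mathcal F$ the corresponding $p\in\mathcal P_+$ is unique. The boundary $\partial\mathcal F$ is defined as the set of $q\in\mathcal F$ whose corresponding power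 vector $p$ satisfies $Cp\le\hat p$ with equality in at least one component. *)

(* Defs.v *)
(* classical reals. Vectors in R^K are functions nat -> R,
   only indices 0..K-1 are meaningful; matrices are nat -> nat -> R. *)
From Stdlib Require Import Reals Lra List.
Open Scope R_scope.

Definition Rsum (n : nat) (f : nat -> R) : R :=
  fold_right Rplus 0 (map f (seq 0 n)).

Definition matvec (K : nat) (V : nat -> nat -> R) (p : nat -> R) (k : nat) : R :=
  Rsum K (fun l => V k l * p l).

Definition SIR (K : nat) (V : nat -> nat -> R) (z p : nat -> R) (k : nat) : R :=
  p k / (matvec K V p k + z k).

Definition in_Pplus (K N : nat) (C : nat -> nat -> R) (phat p : nat -> R) : Prop :=
  (forall k, (k < K)%nat -> 0 < p k) /\
  (forall n, (n < N)%nat -> matvec K C p n <= phat n).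

Definition corresponds (K : nat) (V : nat -> nat -> R) (z gamma : nat -> R)
  (phi : R -> R) (q p : nat -> R) : Prop :=
  forall k, (k < K)%nat -> q k = phi (SIR K V z p k / gamma k).

Definition in_F (K N : nat) (C : nat -> nat -> R) (phat : nat -> R)
  (V : nat -> nat -> R) (z gamma : nat -> R) (phi : R -> R) (q : nat -> R) : Prop :=
  exists p, in_Pplus K N C phat p /\ corresponds K V z gamma phi q p.

Definition in_boundaryF (K N : nat) (C : nat -> nat -> R) (phat : nat -> R)
  (V : nat -> nat -> R) (z gamma : nat -> R) (phi : R -> R) (q : nat -> R) : Prop :=
  exists p, in_Pplus K N C phat p /\ corresponds K V z gamma phi q p /\
    exists n, (n < N)%nat /\ matvec K C p n = phat n.

Definition A2 (phi : R -> R) : Prop :=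
  (exists dphi : R -> R,
      (forall x, 0 < x -> derivable_pt_lim phi x (dphi x)) /\
      (forall x, 0 < x -> continuity_pt dphi x)) /\
  (forall x y, 0 < x -> x < y -> phi x < phi y).

(* (A3): phi^{-1} : Q -> R_{++} is log-convex, Q = phi(R_{++}).  Since phi is
   injective on R_{++}, phi^{-1}(s) = y iff phi y = s (y > 0). Log-convexity:
   Q is convex and log phi^{-1}(t a + (1-t) b) <= t log phi^{-1} a + (1-t) log phi^{-1} b. *)
Definition A3 (phi : R -> R) : Prop :=
  forall x1 x2 t, 0 < x1 -> 0 < x2 -> 0 <= t <= 1 ->
    exists y, 0 < y /\ phi y = t * phi x1 + (1 - t) * phi x2 /\
              ln y <= t * ln x1 + (1 - t) * ln x2.

Inductive reach (K : nat) (V : nat -> nat -> R) : nat -> nat -> Prop :=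
| reach_step : forall i j, (i < K)%nat -> (j < K)%nat -> 0 < V i j -> reach K V i j
| reach_trans : forall i j l, reach K V i j -> reach K V j l -> reach K V i l.

Definition irreducible (K : nat) (V : nat -> nat -> R) : Prop :=
  forall i j, (i < K)%nat -> (j < K)%nat -> i <> j -> reach K V i j.

(* Main.v *)
Require Import Defs.
From Stdlib Require Import Reals Lra Lia List Classical ClassicalEpsilon.
Open Scope R_scope.

Lemma fold_plus_acc (l : list R) (a : R) :
  fold_right Rplus a l = fold_right Rplus 0 l + a.
Proof. induction l; simpl; [lra|rewrite IHl; lra]. Qed.

Lemma Rsum_0 f : Rsum 0 f = 0.
Proof. reflexivity. Qed.

Lemma Rsum_S n f : Rsum (S n) f = Rsum n f + f n.
Proof.
  unfold Rsum. rewrite seq_S, map_app, fold_right_app. simpl.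
  rewrite fold_plus_acc. lra.
Qed.

Lemma Rsum_ext n f g : (forall i, (i < n)%nat -> f i = g i) -> Rsum n f = Rsum n g.
Proof.
  induction n; intros H; [reflexivity|]. rewrite !Rsum_S, IHn, H; auto.
Qed.

Lemma Rsum_le n f g : (forall i, (i < n)%nat -> f i <= g i) -> Rsum n f <= Rsum n g.
Proof.
  induction n; intros H; [rewrite !Rsum_0; lra|]. rewrite !Rsum_S.
  assert (Rsum n f <= Rsum n g) by (apply IHn; auto). assert (f n <= g n) by auto. lra.
Qed.

Lemma Rsum_lt n f g : (0 < n)%nat -> (forall i, (i < n)%nat -> f i < g i) -> Rsum n f < Rsum n g.
Proof.
  intros Hn H. destruct n; [lia|]. rewrite !Rsum_S.
  assert (Rsum n f <= Rsum n g) by (apply Rsum_le; intros; apply Rlt_le; auto).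
  assert (f n < g n) by auto. lra.
Qed.

Lemma Rsum_plus n f g : Rsum n (fun i => f i + g i) = Rsum n f + Rsum n g.
Proof. induction n; [rewrite !Rsum_0; lra|]. rewrite !Rsum_S, IHn; lra. Qed.

Lemma Rsum_scal n c f : Rsum n (fun i => c * f i) = c * Rsum n f.
Proof. induction n; [rewrite !Rsum_0; lra|]. rewrite !Rsum_S, IHn; lra. Qed.

Lemma Rsum_minus n f g : Rsum n (fun i => f i - g i) = Rsum n f - Rsum n g.
Proof. induction n; [rewrite !Rsum_0; lra|]. rewrite !Rsum_S, IHn; lra. Qed.

Lemma Rsum_nonneg n f : (forall i, (i < n)%nat -> 0 <= f i) -> 0 <= Rsum n f.
Proof.
  intros H. replace 0 with (Rsum n (fun _ => 0)).
  - apply Rsum_le; auto.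
  - induction n; [reflexivity|]. rewrite Rsum_S, IHn; auto; lra.
Qed.

Lemma Rsum_zero n f : (forall i, (i < n)%nat -> f i = 0) -> Rsum n f = 0.
Proof.
  intros H. induction n; [reflexivity|]. rewrite Rsum_S, IHn, H; auto; lra.
Qed.

Lemma Rsum_term_le n f j : (forall i, (i < n)%nat -> 0 <= f i) -> (j < n)%nat -> f j <= Rsum n f.
Proof.
  induction n; intros H Hj; [lia|]. rewrite Rsum_S.
  destruct (Nat.eq_dec j n) as [->|Hne].
  - assert (0 <= Rsum n f) by (apply Rsum_nonneg; auto). lra.
  - assert (f j <= Rsum n f) by (apply IHn; auto; lia).
    assert (0 <= f n) by auto. lra.
Qed.

Lemma Rsum_swap n m (f : nat -> nat -> R) :
  Rsum n (fun k => Rsum m (fun l => f k l)) = Rsum m (fun l => Rsum n (fun k => f k l)).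
Proof.
  induction n.
  - rewrite Rsum_0. symmetry. apply Rsum_zero. intros; apply Rsum_0.
  - rewrite Rsum_S, IHn. rewrite <- Rsum_plus. apply Rsum_ext. intros. rewrite Rsum_S. reflexivity.
Qed.

Lemma Rsum_cv n (u : nat -> nat -> R) (l : nat -> R) :
  (forall i, (i < n)%nat -> Un_cv (fun m => u m i) (l i)) ->
  Un_cv (fun m => Rsum n (u m)) (Rsum n l).
Proof.
  induction n; intros H.
  - rewrite Rsum_0. intros e He. exists 0%nat. intros. rewrite Rsum_0. unfold R_dist. rewrite Rminus_0_r, Rabs_R0. auto.
  - rewrite Rsum_S. eapply Un_cv_ext.
    2: { apply CV_plus. apply IHn. intros; apply H; lia. apply H; lia. }
    intros m. simpl. rewrite Rsum_S. reflexivity.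
Qed.

Lemma fin_min n (f : nat -> R) : (forall i, (i < n)%nat -> 0 < f i) ->
  exists b, 0 < b /\ b <= 1 /\ forall i, (i < n)%nat -> b <= f i.
Proof.
  induction n; intros H.
  - exists 1. split; [lra|split; [lra|intros; lia]].
  - destruct IHn as [b [Hb [Hb1 Hb2]]]. intros; apply H; lia.
    exists (Rmin b (f n)). split; [apply Rmin_glb_lt; auto|split].
    + pose proof (Rmin_l b (f n)); lra.
    + intros i Hi. destruct (Nat.eq_dec i n) as [->|]. apply Rmin_r.
      pose proof (Rmin_l b (f n)); pose proof (Hb2 i ltac:(lia)); lra.
Qed.

Lemma Rdiv_le_0_compat a b : 0 <= a -> 0 < b -> 0 <= a / b.
Proof. intros. unfold Rdiv. apply Rmult_le_pos; auto. left; apply Rinv_0_lt_compat; auto. Qed.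

Fixpoint Yit (K : nat) (A : nat -> nat -> R) (c : nat -> R) (m : nat) (j : nat) : R :=
  match m with
  | O => 0
  | S m' => c j + Rsum K (fun k => Yit K A c m' k * A k j)
  end.

Lemma fixpoint_exists K (A : nat -> nat -> R) (c p : nat -> R) (beta : R) :
  (forall k j, (k < K)%nat -> (j < K)%nat -> 0 <= A k j) ->
  (forall k, (k < K)%nat -> 0 < p k) ->
  (forall k, (k < K)%nat -> 0 <= c k) ->
  0 < beta -> beta <= 1 ->
  (forall k, (k < K)%nat -> Rsum K (fun j => A k j * p j) <= (1 - beta) * p k) ->
  exists y : nat -> R, (forall j, (j < K)%nat -> 0 <= y j /\ c j <= y j) /\
    forall j, (j < K)%nat -> y j = c j + Rsum K (fun k => y k * A k j).
Proof.
  intros HA Hp Hc Hb Hb1 Hsub.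
  set (Y := Yit K A c).
  assert (Hmono : forall m j, (j < K)%nat -> 0 <= Y m j <= Y (S m) j).
  { induction m; intros j Hj.
    - change (0 <= 0 <= c j + Rsum K (fun k => 0 * A k j)). split; [lra|]. assert (0 <= Rsum K (fun k => 0 * A k j)).
      apply Rsum_nonneg. intros; lra. pose proof (Hc j Hj). lra.
    - split; [pose proof (IHm j Hj); lra|].
      change (c j + Rsum K (fun k => Y m k * A k j) <= c j + Rsum K (fun k => Y (S m) k * A k j)).
      assert (Rsum K (fun k => Y m k * A k j) <= Rsum K (fun k => Y (S m) k * A k j)).
      { apply Rsum_le. intros i Hi. apply Rmult_le_compat_r; [apply HA; auto|apply IHm; auto]. }
      lra. }
  set (B := Rsum K (fun j => c j * p j) / beta).
  assert (HB0 : 0 <= Rsum K (fun j => c j * p j)).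
  { apply Rsum_nonneg. intros i Hi. pose proof (Hc i Hi); pose proof (Hp i Hi); nra. }
  assert (Hbound : forall m, Rsum K (fun j => Y m j * p j) <= B).
  { induction m.
    - rewrite Rsum_zero by (intros; unfold Y; simpl; lra). unfold B. apply Rdiv_le_0_compat; lra.
    - change (Rsum K (fun j => (c j + Rsum K (fun k => Y m k * A k j)) * p j) <= B).
      rewrite (Rsum_ext K _ (fun j => c j * p j + Rsum K (fun k => Y m k * A k j * p j))).
      2:{ intros. rewrite Rmult_plus_distr_r. f_equal. rewrite Rmult_comm, <- Rsum_scal.
          apply Rsum_ext; intros; ring. }
      rewrite Rsum_plus, Rsum_swap.
      assert (Rsum K (fun k => Rsum K (fun j => Y m k * A k j * p j)) <= (1 - beta) * Rsum K (fun k => Y m k * p k)).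
      { rewrite <- Rsum_scal. apply Rsum_le. intros k Hk.
        rewrite (Rsum_ext K _ (fun j => Y m k * (A k j * p j))) by (intros; ring).
        rewrite Rsum_scal. pose proof (Hsub k Hk). pose proof (proj1 (Hmono m k Hk)). nra. }
      assert ((1 - beta) * Rsum K (fun k => Y m k * p k) <= (1 - beta) * B) by (apply Rmult_le_compat_l; lra).
      unfold B in *. assert (Rsum K (fun j => c j * p j) = beta * (Rsum K (fun j => c j * p j) / beta)) by (field; lra).
      lra. }
  assert (Hcv : forall j, exists l, (j < K)%nat -> Un_cv (fun m => Y m j) l).
  { intros j. destruct (Nat.lt_ge_cases j K) as [Hj|Hj]; [|exists 0; intros; lia].
    assert (Ug : Un_growing (fun m => Y m j)) by (intros m; apply Hmono; auto).
    assert (Hub : has_ub (fun m => Y m j)).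
    { exists (B / p j). intros x [m ->].
      assert (Y m j * p j <= B).
      { eapply Rle_trans; [|apply (Hbound m)]. apply (Rsum_term_le K (fun j => Y m j * p j)); auto.
        intros i Hi. pose proof (proj1 (Hmono m i Hi)); pose proof (Hp i Hi); nra. }
      pose proof (Hp j Hj). apply (Rmult_le_reg_r (p j)); auto. unfold Rdiv. rewrite Rmult_assoc, Rinv_l; lra. }
    destruct (growing_cv _ Ug Hub) as [l Hl]. exists l; auto. }
  set (y := fun j => proj1_sig (constructive_indefinite_description _ (Hcv j))).
  assert (Hy : forall j, (j < K)%nat -> Un_cv (fun m => Y m j) (y j)).
  { intros j Hj. unfold y. destruct (constructive_indefinite_description _ (Hcv j)); simpl; auto. }
  exists y. split.
  - intros j Hj. assert (Ug : Un_growing (fun m => Y m j)) by (intros m; apply Hmono; auto).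
    pose proof (growing_ineq _ _ Ug (Hy j Hj) 1%nat) as H.
    change (c j + Rsum K (fun k => 0 * A k j) <= y j) in H. pose proof (Hc j Hj).
    assert (0 <= Rsum K (fun k => 0 * A k j)) by (apply Rsum_nonneg; intros; lra). lra.
  - intros j Hj. apply (UL_sequence (fun m => Y (S m) j)).
    + intros e He. destruct (Hy j Hj e He) as [N0 HN]. exists N0. intros n Hn. apply HN. lia.
    + simpl. apply CV_plus. intros e He; exists 0%nat; intros; unfold R_dist; rewrite Rminus_diag, Rabs_R0; auto.
      apply Rsum_cv. intros i Hi. apply CV_mult. apply Hy; auto.
      intros e He; exists 0%nat; intros; unfold R_dist; rewrite Rminus_diag, Rabs_R0; auto.
Qed.

Lemma exp_le_mono x y : x <= y -> exp x <= exp y.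
Proof. intros [H|H]; [left; apply exp_increasing; auto|subst; lra]. Qed.

Lemma phi_le (phi : R -> R) : (forall x y, 0 < x -> x < y -> phi x < phi y) ->
  forall x y, 0 < x -> x <= y -> phi x <= phi y.
Proof. intros H x y Hx [Hxy|Hxy]; [left; apply H; auto|subst; lra]. Qed.

Lemma phi_tangent (phi : R -> R) : A2 phi -> A3 phi ->
  forall a, 0 < a -> exists D, 0 < D /\ forall a', 0 < a' -> phi a' <= phi a + D * (ln a' - ln a).
Proof.
  intros [[dphi [Hd _]] Hmon] HA3 a Ha.
  set (h := fun u => phi (exp u)).
  assert (Hconc : forall u1 u2 t, 0 <= t <= 1 -> t * h u1 + (1 - t) * h u2 <= h (t * u1 + (1 - t) * u2)).
  { intros u1 u2 t Ht. destruct (HA3 (exp u1) (exp u2) t (exp_pos _) (exp_pos _) Ht) as [y [Hy [Hy1 Hy2]]].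
    unfold h. rewrite <- Hy1. rewrite !ln_exp in Hy2. apply phi_le; auto.
    rewrite <- (exp_ln y) by auto. apply exp_le_mono; auto. }
  set (u := ln a). set (D := dphi a * a).
  assert (Hder : derivable_pt_lim h u D).
  { assert (H1 := derivable_pt_lim_comp exp phi u (exp u) (dphi a) (derivable_pt_lim_exp u)).
    unfold u in *. rewrite exp_ln in H1 by auto. specialize (H1 (Hd a Ha)).
    unfold D. exact H1. }
  assert (Htan : forall u', h u' <= h u + D * (u' - u)).
  { intros u'. destruct (Req_dec u' u) as [->|Hne]; [lra|].
    apply Rnot_lt_le. intros Hg. set (dl := u' - u).
    assert (Hdl : 0 < Rabs dl) by (apply Rabs_pos_lt; unfold dl; lra).
    set (g := h u' - h u - D * dl).
    assert (Hg0 : 0 < g) by (unfold g, dl; lra).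
    destruct (Hder (g / Rabs dl)) as [del Hdel].
    { apply Rdiv_lt_0_compat; auto. }
    set (t := Rmin (1/2) (del / (2 * Rabs dl))).
    assert (Ht0 : 0 < t). { apply Rmin_glb_lt; [lra|]. apply Rdiv_lt_0_compat; [apply cond_pos|lra]. }
    assert (Ht1 : t <= 1/2) by apply Rmin_l.
    assert (Ht2 : t <= del / (2 * Rabs dl)) by apply Rmin_r.
    assert (Hhh : t * dl <> 0). { apply Rmult_integral_contrapositive; split; unfold dl; lra. }
    assert (Habs : Rabs (t * dl) < del).
    { rewrite Rabs_mult, (Rabs_pos_eq t) by lra.
      assert (t * Rabs dl <= del / (2 * Rabs dl) * Rabs dl) by (apply Rmult_le_compat_r; lra).
      assert (del / (2 * Rabs dl) * Rabs dl = del / 2) by (field; lra).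
      pose proof (cond_pos del). lra. }
    specialize (Hdel (t * dl) Hhh Habs).
    set (Q := (h (u + t * dl) - h u) / (t * dl)) in Hdel.
    assert (HQ : h (u + t * dl) - h u = Q * (t * dl)) by (unfold Q; field; try split; unfold dl; lra).
    assert (Hc := Hconc u' u t ltac:(lra)).
    replace (t * u' + (1 - t) * u) with (u + t * dl) in Hc by (unfold dl; ring).
    assert (t * ((Q - D) * dl) >= t * g) by (unfold g; nra).
    assert ((Q - D) * dl >= g) by nra.
    assert ((Q - D) * dl <= Rabs (Q - D) * Rabs dl) by (rewrite <- Rabs_mult; apply Rle_abs).
    assert (Rabs (Q - D) * Rabs dl < g / Rabs dl * Rabs dl) by (apply Rmult_lt_compat_r; auto).
    assert (g / Rabs dl * Rabs dl = g) by (field; lra).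
    lra. }
  exists D. split.
  - assert (h (u + 1) <= h u + D) by (pose proof (Htan (u + 1)); replace (u + 1 - u) with 1 in H by ring; lra).
    assert (h u < h (u + 1)) by (unfold h; apply Hmon; [apply exp_pos|apply exp_increasing; lra]).
    lra.
  - intros a' Ha'. pose proof (Htan (ln a')). unfold h, u in H. rewrite !exp_ln in H by auto. exact H.
Qed.

Lemma ln_le_sub1 t : 0 < t -> ln t <= t - 1.
Proof. intros Ht. pose proof (exp_ineq1_le (ln t)). rewrite exp_ln in H; auto. lra. Qed.

Lemma ln_div x y : 0 < x -> 0 < y -> ln (x / y) = ln x - ln y.
Proof. intros. unfold Rdiv. rewrite ln_mult, ln_Rinv; try lra; auto; apply Rinv_0_lt_compat; auto. Qed.

Lemma matvec_nonneg K (V : nat -> nat -> R) p k :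
  (forall l, (l < K)%nat -> 0 <= V k l) -> (forall l, (l < K)%nat -> 0 < p l) -> 0 <= matvec K V p k.
Proof. intros. unfold matvec. apply Rsum_nonneg. intros l Hl. pose proof (H l Hl); pose proof (H0 l Hl); nra. Qed.

(* log-sum-exp convexity *)
Lemma lse K (v p p' : nat -> R) (z : R) :
  (forall l, (l < K)%nat -> 0 <= v l) -> (forall l, (l < K)%nat -> 0 < p l) ->
  (forall l, (l < K)%nat -> 0 < p' l) -> 0 < z ->
  let I := Rsum K (fun l => v l * p l) + z in
  let I' := Rsum K (fun l => v l * p' l) + z in
  Rsum K (fun l => v l * p l / I * (ln (p' l) - ln (p l))) <= ln I' - ln I.
Proof.
  intros Hv Hp Hp' Hz I I'.
  set (SA := Rsum K (fun l => v l * p l)) in *.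
  set (SB := Rsum K (fun l => v l * p' l)) in *.
  assert (HSA : 0 <= SA) by (apply Rsum_nonneg; intros l Hl; pose proof (Hv l Hl); pose proof (Hp l Hl); nra).
  assert (HSB : 0 <= SB) by (apply Rsum_nonneg; intros l Hl; pose proof (Hv l Hl); pose proof (Hp' l Hl); nra).
  assert (HI : 0 < I) by (unfold I; lra). assert (HI' : 0 < I') by (unfold I'; lra).
  set (M := I' / I). assert (HM : 0 < M) by (unfold M; apply Rdiv_lt_0_compat; auto).
  set (LM := ln I' - ln I).
  assert (HLM : ln M = LM) by (unfold M, LM; apply ln_div; auto).
  apply Rle_trans with (Rsum K (fun l => (LM - 1) * (v l * p l / I) + / M * (v l * p' l / I))).
  { apply Rsum_le. intros l Hl. pose proof (Hv l Hl); pose proof (Hp l Hl); pose proof (Hp' l Hl).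
    assert (Hr : 0 < p' l / p l / M) by (repeat apply Rdiv_lt_0_compat; auto).
    pose proof (ln_le_sub1 _ Hr). rewrite !ln_div in H2 by (auto; apply Rdiv_lt_0_compat; auto).
    rewrite HLM in H2.
    assert (Hal : 0 <= v l * p l / I) by (apply Rdiv_le_0_compat; [nra|auto]).
    assert (v l * p l / I * (ln (p' l) - ln (p l)) <= v l * p l / I * (LM + (p' l / p l / M - 1))) by (apply Rmult_le_compat_l; lra).
    assert (v l * p l / I * (LM + (p' l / p l / M - 1)) = (LM - 1) * (v l * p l / I) + / M * (v l * p' l / I)) by (field; lra).
    lra. }
  rewrite Rsum_plus, !Rsum_scal.
  rewrite (Rsum_ext K (fun l => v l * p l / I) (fun l => / I * (v l * p l))) by (intros; field; lra).
  rewrite (Rsum_ext K (fun l => v l * p' l / I) (fun l => / I * (v l * p' l))) by (intros; field; lra).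
  rewrite !Rsum_scal. fold SA SB.
  assert (Hk : ln (I / I') <= I / I' - 1) by (apply ln_le_sub1; apply Rdiv_lt_0_compat; auto).
  rewrite ln_div in Hk by auto. assert (HLMd : LM = ln I' - ln I) by reflexivity.
  assert (E1 : / M * (/ I * SB) = SB / I') by (unfold M; field; lra).
  rewrite E1.
  assert (E2 : LM - ((LM - 1) * (/ I * SA) + SB / I') = z / I * (LM - 1 + I / I')).
  { unfold I, I' in *. field. lra. }
  assert (0 <= z / I * (LM - 1 + I / I')).
  { apply Rmult_le_pos. apply Rdiv_le_0_compat; lra. lra. }
  lra.
Qed.

Lemma forward (K N : nat) (C : nat -> nat -> R) (phat : nat -> R)
  (V : nat -> nat -> R) (z gamma : nat -> R) (phi : R -> R)
  (HC01 : forall n k, (n < N)%nat -> (k < K)%nat -> C n k = 0 \/ C n k = 1)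
  (Hphat : forall n, (n < N)%nat -> 0 < phat n)
  (HVnn : forall k l, (k < K)%nat -> (l < K)%nat -> 0 <= V k l)
  (Hz : forall k, (k < K)%nat -> 0 < z k)
  (Hgamma : forall k, (k < K)%nat -> 0 < gamma k)
  (HA2 : A2 phi) (HA3 : A3 phi)
  (Hirr : irreducible K V)
  (q : nat -> R) :
  in_boundaryF K N C phat V z gamma phi q ->
  exists w : nat -> R, (forall k, (k < K)%nat -> 0 < w k) /\
    forall x, in_F K N C phat V z gamma phi x ->
      Rsum K (fun k => w k * x k) <= Rsum K (fun k => w k * q k).
Proof.
  intros [p [[Hp HpC] [Hcor [n0 [Hn0 Heq]]]]].
  set (I := fun k => matvec K V p k + z k).
  assert (HI : forall k, (k < K)%nat -> 0 < I k).
  { intros k Hk. unfold I. pose proof (matvec_nonneg K V p k (fun l Hl => HVnn k l Hk Hl) Hp). pose proof (Hz k Hk). lra. }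
  set (s := fun k => p k / I k).
  assert (Hs : forall k, (k < K)%nat -> 0 < s k) by (intros; unfold s; apply Rdiv_lt_0_compat; auto).
  set (c := fun l => C n0 l).
  set (A := fun k j => s k * V k j).
  assert (HA : forall k j, (k < K)%nat -> (j < K)%nat -> 0 <= A k j).
  { intros k j Hk Hj. unfold A. pose proof (Hs k Hk); pose proof (HVnn k j Hk Hj); nra. }
  destruct (fin_min K (fun k => z k / I k)) as [beta [Hb [Hb1 Hbk]]].
  { intros; apply Rdiv_lt_0_compat; auto. }
  assert (Hsub : forall k, (k < K)%nat -> Rsum K (fun j => A k j * p j) <= (1 - beta) * p k).
  { intros k Hk. unfold A. rewrite (Rsum_ext K _ (fun j => s k * (V k j * p j))) by (intros; ring).
    rewrite Rsum_scal. fold (matvec K V p k).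
    assert (s k * matvec K V p k = p k * (1 - z k / I k)) by (unfold s, I in *; pose proof (HI k Hk); unfold I in H; field; lra).
    rewrite H. pose proof (Hbk k Hk). pose proof (Hp k Hk). simpl in H0. nra. }
  assert (Hc : forall k, (k < K)%nat -> 0 <= c k) by (intros k Hk; unfold c; destruct (HC01 n0 k Hn0 Hk); lra).
  destruct (fixpoint_exists K A c p beta HA Hp Hc Hb Hb1 Hsub) as [y [Hy Hyeq]].
  assert (Hj0 : exists j0, (j0 < K)%nat /\ c j0 = 1).
  { apply NNPP. intros Hno.
    assert (matvec K C p n0 = 0).
    { unfold matvec. apply Rsum_zero. intros l Hl. destruct (HC01 n0 l Hn0 Hl) as [H|H].
      rewrite H; ring. exfalso; apply Hno; exists l; split; auto. }
    pose proof (Hphat n0 Hn0). lra. }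
  destruct Hj0 as [j0 [Hj0 Hcj0]].
  assert (Hreach : forall i j, reach K V i j -> 0 < y i -> 0 < y j).
  { intros i j Hr. induction Hr as [i j Hi Hj Hv|i j l _ IH1 _ IH2]; [|auto].
    intros Hyi. rewrite Hyeq by auto.
    assert (y i * A i j <= Rsum K (fun k => y k * A k j)).
    { apply (Rsum_term_le K (fun k => y k * A k j)); auto. intros k Hk. pose proof (proj1 (Hy k Hk)); pose proof (HA k j Hk Hj); nra. }
    assert (0 < y i * A i j) by (unfold A; pose proof (Hs i Hi); apply Rmult_lt_0_compat; [auto|nra]).
    pose proof (Hc j Hj). lra. }
  assert (Hypos : forall j, (j < K)%nat -> 0 < y j).
  { intros j Hj. assert (0 < y j0) by (pose proof (Hy j0 Hj0); lra).
    destruct (Nat.eq_dec j0 j) as [<-|Hne]; auto. apply (Hreach j0); auto. }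
  assert (HDex : forall k, exists D, (k < K)%nat -> 0 < D /\ forall a', 0 < a' ->
            phi a' <= phi (s k / gamma k) + D * (ln a' - ln (s k / gamma k))).
  { intros k. destruct (Nat.lt_ge_cases k K) as [Hk|Hk]; [|exists 0; intros; lia].
    destruct (phi_tangent phi HA2 HA3 (s k / gamma k)) as [D [HD HD2]].
    apply Rdiv_lt_0_compat; auto. exists D; auto. }
  set (Df := fun k => proj1_sig (constructive_indefinite_description _ (HDex k))).
  assert (HDf : forall k, (k < K)%nat -> 0 < Df k /\ forall a', 0 < a' ->
            phi a' <= phi (s k / gamma k) + Df k * (ln a' - ln (s k / gamma k))).
  { intros k Hk. unfold Df. destruct (constructive_indefinite_description _ (HDex k)); simpl; auto. }
  exists (fun k => y k * p k / Df k). split.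
  { intros k Hk. pose proof (Hypos k Hk); pose proof (Hp k Hk); pose proof (proj1 (HDf k Hk)).
    apply Rdiv_lt_0_compat; auto. apply Rmult_lt_0_compat; auto. }
  intros x [p' [[Hp' Hp'C] Hcor']].
  set (I' := fun k => matvec K V p' k + z k).
  assert (HI' : forall k, (k < K)%nat -> 0 < I' k).
  { intros k Hk. unfold I'. pose proof (matvec_nonneg K V p' k (fun l Hl => HVnn k l Hk Hl) Hp'). pose proof (Hz k Hk). lra. }
  set (L := fun l => ln (p' l) - ln (p l)).
  set (LM := fun k => ln (I' k) - ln (I k)).
  apply Rle_trans with (Rsum K (fun k => y k * p k / Df k * q k + y k * p k * (L k - LM k))).
  { apply Rsum_le. intros k Hk. rewrite (Hcor k Hk), (Hcor' k Hk).
    fold (I k) (s k). fold (I' k).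
    destruct (HDf k Hk) as [HD HD2].
    set (s' := p' k / I' k).
    assert (Hs' : 0 < s') by (apply Rdiv_lt_0_compat; auto).
    specialize (HD2 (s' / gamma k) ltac:(apply Rdiv_lt_0_compat; auto)).
    assert (Hg : 0 < gamma k) by auto.
    rewrite !ln_div in HD2 by auto.
    unfold s' in HD2. rewrite (ln_div (p' k)) in HD2 by auto. unfold s in HD2. rewrite (ln_div (p k)) in HD2 by auto.
    assert (Hw : 0 <= y k * p k / Df k).
    { pose proof (Hypos k Hk); pose proof (Hp k Hk). apply Rdiv_le_0_compat; auto. nra. }
    apply Rmult_le_compat_l with (r := y k * p k / Df k) in HD2; auto.
    unfold L, LM.
    assert (y k * p k / Df k * Df k = y k * p k) by (field; lra).
    change (SIR K V z p' k) with (p' k / I' k). change (SIR K V z p k) with (p k / I k). rewrite Rmult_plus_distr_l, <- Rmult_assoc, H in HD2. lra. }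
  rewrite Rsum_plus. cut (Rsum K (fun i => y i * p i * (L i - LM i)) <= 0); [lra|].
  apply Rle_trans with (Rsum K (fun k => y k * p k * L k - Rsum K (fun l => y k * p k * (V k l * p l / I k * L l)))).
  { apply Rsum_le. intros k Hk.
    pose proof (lse K (V k) p p' (z k) (fun l Hl => HVnn k l Hk Hl) Hp Hp' (Hz k Hk)). simpl in H.
    fold (matvec K V p k) (matvec K V p' k) in H. fold (I k) (I' k) in H. fold (LM k) in H.
    rewrite Rsum_scal. assert (0 <= y k * p k) by (pose proof (Hypos k Hk); pose proof (Hp k Hk); nra).
    change (Rsum K (fun l => V k l * p l / I k * L l) <= LM k) in H. assert (y k * p k * Rsum K (fun l => V k l * p l / I k * L l) <= y k * p k * LM k) by (apply Rmult_le_compat_l; auto). lra. }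
  rewrite Rsum_minus, Rsum_swap, <- Rsum_minus.
  apply Rle_trans with (Rsum K (fun l => c l * (p' l - p l))).
  { apply Rsum_le. intros l Hl.
    rewrite (Rsum_ext K _ (fun k => L l * p l * (y k * A k l))).
    2:{ intros k Hk. unfold A, s. field; apply Rgt_not_eq, HI; auto. }
    rewrite Rsum_scal.
    assert (E : y l * p l * L l - L l * p l * Rsum K (fun k => y k * A k l) = c l * p l * L l).
    { rewrite (Hyeq l Hl) at 1. ring. }
    rewrite E. pose proof (Hc l Hl). pose proof (Hp l Hl). pose proof (Hp' l Hl).
    assert (L l <= p' l / p l - 1) by (unfold L; rewrite <- ln_div by auto; apply ln_le_sub1; apply Rdiv_lt_0_compat; auto).
    assert (c l * p l * L l <= c l * p l * (p' l / p l - 1)) by (apply Rmult_le_compat_l; nra).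
    assert (c l * p l * (p' l / p l - 1) = c l * (p' l - p l)) by (field; lra). lra. }
  rewrite (Rsum_ext K _ (fun l => C n0 l * p' l - C n0 l * p l)) by (intros; unfold c; ring).
  rewrite Rsum_minus. fold (matvec K C p' n0) (matvec K C p n0).
  rewrite Heq. pose proof (Hp'C n0 Hn0). lra.
Qed.

Lemma matvec_scal K (V : nat -> nat -> R) (a : R) p k :
  matvec K V (fun l => a * p l) k = a * matvec K V p k.
Proof. unfold matvec. rewrite <- Rsum_scal. apply Rsum_ext; intros; ring. Qed.

Theorem lemma1 (K N : nat) (C : nat -> nat -> R) (phat : nat -> R)
  (V : nat -> nat -> R) (z gamma : nat -> R) (phi : R -> R)
  (HK : (2 <= K)%nat)
  (HC01 : forall n k, (n < N)%nat -> (k < K)%nat -> C n k = 0 \/ C n k = 1)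
  (HCcol : forall k, (k < K)%nat -> exists n, (n < N)%nat /\ C n k = 1)
  (Hphat : forall n, (n < N)%nat -> 0 < phat n)
  (HVnn : forall k l, (k < K)%nat -> (l < K)%nat -> 0 <= V k l)
  (HVdiag : forall k, (k < K)%nat -> V k k = 0)
  (Hz : forall k, (k < K)%nat -> 0 < z k)
  (Hgamma : forall k, (k < K)%nat -> 0 < gamma k)
  (HA2 : A2 phi) (HA3 : A3 phi)
  (Hirr : irreducible K V)
  (q : nat -> R) (Hq : in_F K N C phat V z gamma phi q) :
  in_boundaryF K N C phat V z gamma phi q <->
  exists w : nat -> R, (forall k, (k < K)%nat -> 0 < w k) /\
    forall x, in_F K N C phat V z gamma phi x ->
      Rsum K (fun k => w k * x k) <= Rsum K (fun k => w k * q k).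
Proof.
  split.
  - apply forward; auto.
  - intros [w [Hw Hmax]]. apply NNPP. intros Hnb.
    destruct Hq as [p [[Hp HpC] Hcor]].
    assert (Hstrict : forall n, (n < N)%nat -> matvec K C p n < phat n).
    { intros n Hn. destruct (HpC n Hn) as [H|H]; auto. exfalso. apply Hnb.
      exists p. split; [split; auto|split; auto]. exists n; auto. }
    destruct (fin_min N (fun n => (phat n - matvec K C p n) / phat n)) as [e [He [He1 Hen]]].
    { intros n Hn. apply Rdiv_lt_0_compat; auto. pose proof (Hstrict n Hn); lra. }
    set (p' := fun l => (1 + e) * p l).
    set (x := fun k => phi (SIR K V z p' k / gamma k)).
    assert (HxF : in_F K N C phat V z gamma phi x).
    { exists p'. split; [split|].
      - intros k Hk. unfold p'. pose proof (Hp k Hk). nra.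
      - intros n Hn. unfold p'. rewrite matvec_scal. pose proof (Hen n Hn). pose proof (Hphat n Hn).
        pose proof (HpC n Hn).
        assert (e * phat n <= phat n - matvec K C p n).
        { apply (Rmult_le_compat_r (phat n)) in H; [|lra].
          replace ((phat n - matvec K C p n) / phat n * phat n) with (phat n - matvec K C p n) in H by (field; lra). lra. }
        nra.
      - intros k Hk. reflexivity. }
    specialize (Hmax x HxF).
    assert (Rsum K (fun k => w k * q k) < Rsum K (fun k => w k * x k)).
    { apply Rsum_lt; [lia|]. intros k Hk. apply Rmult_lt_compat_l; auto.
      rewrite (Hcor k Hk). unfold x. apply (proj2 HA2).
      - unfold SIR. pose proof (matvec_nonneg K V p k (fun l Hl => HVnn k l Hk Hl) Hp). pose proof (Hz k Hk).
        pose proof (Hp k Hk). pose proof (Hgamma k Hk). apply Rdiv_lt_0_compat; [apply Rdiv_lt_0_compat; lra|lra].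
      - unfold SIR, p'. rewrite matvec_scal.
        pose proof (matvec_nonneg K V p k (fun l Hl => HVnn k l Hk Hl) Hp). pose proof (Hz k Hk).
        pose proof (Hp k Hk). pose proof (Hgamma k Hk).
        unfold Rdiv. apply Rmult_lt_compat_r; [apply Rinv_0_lt_compat; auto|].
        set (M := matvec K V p k) in *.
        apply (Rmult_lt_reg_r ((M + z k) * ((1 + e) * M + z k))); [apply Rmult_lt_0_compat; nra|].
        replace (p k * / (M + z k) * ((M + z k) * ((1 + e) * M + z k))) with (p k * ((1 + e) * M + z k)) by (field; lra).
        replace ((1 + e) * p k * / ((1 + e) * M + z k) * ((M + z k) * ((1 + e) * M + z k))) with ((1 + e) * p k * (M + z k)) by (field; nra).
        assert (0 < p k * e * z k) by (apply Rmult_lt_0_compat; [apply Rmult_lt_0_compat|]; lra). nra. }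
    lra.
Qed.
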